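(* Let $t\ge2$ and $v\ge2$ be integers. Then an optimum $(d,t)$-CDA$((d+1)v^t;2t,v)$ exists for every positive integer $d$ with $d+1\le v$.
   Context: Consecutive $t$-way interaction in an $N\times k$ array $A=(a_{ij})$ over a $v$-set $V$: $T=\{(i,x_i),\dots,(i+t-1,x_{i+t-1})\}$, $1\le i\le k-t+1$, $x_r\in V$; $\rho(A,T)=\{r: a_{r,j}=x_j\ \forall (j,x_j)\in T\}$, $\rho(A,\mathcal T)=\bigcup_{T\in\mathcal T}\rho(A,T)$. A $(d,t)$-CDA$(N;k,v)$ is an $N\times k$ array over $V$ in which every $t$ consecutive columns contain every $t$-tuple at least once, and such that for every set $\mathcal T$ of exactly $d$ distinct consecutive $t$-way interactions and every consecutive $t$-way interaction $T$: $\rho(A,T)\subseteq\rho(A,\mathcal T)$ iff $T\in\mathcal T$. It is optimum if $N=(d+1)v^t$. *)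

(* Defs.v *)
From mathcomp Require Import all_boot all_order all_algebra.
Set Implicit Arguments. Unset Strict Implicit. Unset Printing Implicit Defensive.

(* Arrays: an N x k array over the v-set V = 'I_v is a matrix 'M['I_v]_(N,k).
   Rows and columns are 0-indexed. *)

(* A consecutive t-way interaction in k columns over 'I_v: a starting column
   i (0 <= i <= k - t, i.e. i : 'I_(k - t + 1)) and values x_0..x_{t-1};
   it stands for {(i, x_0), ..., (i+t-1, x_{t-1})}. *)
Definition cinter (k t v : nat) : finType :=
  ('I_(k - t + 1) * {ffun 'I_t -> 'I_v})%type.

Definition rho (N k t v : nat) (A : 'M['I_v]_(N, k)) (T : cinter k t v)
  : {set 'I_N} :=
  [set r : 'I_N | [forall j : 'I_t, forall c : 'I_k,
      (val c == val T.1 + val j) ==> (A r c == T.2 j)]].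

Definition rhoS (N k t v : nat) (A : 'M['I_v]_(N, k)) (cT : {set cinter k t v})
  : {set 'I_N} :=
  \bigcup_(T in cT) rho A T.

Definition is_CDA (d t N k v : nat) (A : 'M['I_v]_(N, k)) : Prop :=
  (forall T : cinter k t v, rho A T != set0) /\
  (forall (cT : {set cinter k t v}) (T : cinter k t v),
      #|cT| = d -> (rho A T \subset rhoS A cT <-> T \in cT)).

(* Main.v *)
Require Import Defs.
From mathcomp Require Import all_boot all_order all_algebra.
From mathcomp Require Import zify.
Set Implicit Arguments. Unset Strict Implicit. Unset Printing Implicit Defensive.

Lemma card_bigcup_le (I T : finType) (P : pred I) (F : I -> {set T}) :
  #|\bigcup_(i | P i) F i| <= \sum_(i | P i) #|F i|.
Proof.
elim/big_rec2: _ => [|i U n _ IH]; first by rewrite cards0.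
apply: leq_trans (leq_card_setU _ _) _; by rewrite leq_add2l.
Qed.

Definition colI (t : nat) (ht : 0 < t) (c : nat) : 'I_t := Ordinal (ltn_pmod c ht).
Lemma pos_of_ord v (a : 'I_v) : 0 < v.
Proof. exact: leq_ltn_trans (leq0n a) (ltn_ord a). Qed.
Definition addI v (a : 'I_v) (s : nat) : 'I_v :=
  Ordinal (ltn_pmod (a + s) (pos_of_ord a)).

Definition Rt d t v : finType := ('I_(d+1) * {ffun 'I_t -> 'I_v})%type.

Definition F d t v (ht : 0 < t) (r : Rt d t v) (c : nat) : 'I_v :=
  if c < t then r.2 (colI ht c) else addI (r.2 (colI ht c)) r.1.

Lemma valF_lt d t v ht (r : Rt d t v) c : c < t -> val (F ht r c) = val (r.2 (colI ht c)).
Proof. by move=> h; rewrite /F h. Qed.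
Lemma valF_ge d t v ht (r : Rt d t v) c : t <= c ->
  val (F ht r c) = (r.2 (colI ht c) + r.1) %% v.
Proof. by move=> h; rewrite /F ltnNge h. Qed.

Lemma colI_small t ht (c : 'I_t) : colI ht c = c.
Proof. by apply: val_inj; rewrite /= modn_small. Qed.
Lemma colI_t t ht (c : 'I_t) : colI ht (c + t) = c.
Proof. by apply: val_inj; rewrite /= modnDr modn_small. Qed.

Lemma keyF d t v ht (hv : d + 1 <= v) (r1 r2 : Rt d t v) a : a < t ->
  (forall j, j < t -> F ht r1 (a+j) = F ht r2 (a+j)) ->
  F ht r1 (a+t) = F ht r2 (a+t) -> r1 = r2.
Proof.
move=> ha.
case: r1 r2 => [s1 x1] [s2 x2] hag hlast.
have e0 := hag 0 ht. rewrite addn0 in e0.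
move/(congr1 val): e0; rewrite !valF_lt //= => e0.
move/(congr1 val): hlast; rewrite !valF_ge ?leq_addl //= => hl.
have hc : colI ht (a+t) = colI ht a by apply: val_inj; rewrite /= modnDr.
rewrite hc e0 in hl.
have hs : s1 = s2.
  apply: val_inj; move/eqP: hl; rewrite eqn_modDl => /eqP.
  have h1 := ltn_ord s1; have h2 := ltn_ord s2.
  rewrite !modn_small //; lia.
subst s2; congr pair; apply/ffunP => c; apply: val_inj.
case: (leqP a c) => hac.
- have h : c - a < t by have := ltn_ord c; lia.
  have := hag _ h; rewrite (subnKC hac) => /(congr1 val).
  by rewrite !valF_lt //= colI_small.
- have h : c + t - a < t by lia.
  have := hag _ h; have -> : a + (c + t - a) = c + t by lia.
  move/(congr1 val); rewrite !valF_ge ?leq_addl //= colI_t.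
  rewrite ![_ + s1]addnC => /eqP; rewrite eqn_modDl => /eqP.
  by rewrite !modn_small.
Qed.

Lemma two_windows d t v ht (hv : d + 1 <= v) (r1 r2 : Rt d t v) i i' :
  i < i' -> i' <= t ->
  (forall j, j < t -> F ht r1 (i+j) = F ht r2 (i+j)) ->
  (forall j, j < t -> F ht r1 (i'+j) = F ht r2 (i'+j)) -> r1 = r2.
Proof.
move=> hi hi' h1 h2.
apply: (keyF hv _ h1); first lia.
have hj : i + t - i' < t by lia.
have := h2 _ hj; by have -> : i' + (i + t - i') = i + t by lia.
Qed.

Definition wx d t v (ht : 0 < t) (i : nat) (y : {ffun 'I_t -> 'I_v}) (s : 'I_(d+1))
  : {ffun 'I_t -> 'I_v} :=
  [ffun c : 'I_t => if i <= c then y (colI ht (c - i))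
                    else addI (y (colI ht (c + t - i))) (v - s)].
Definition w d t v ht i y (s : 'I_(d+1)) : Rt d t v := (s, wx ht i y s).

Lemma w_ok d t v ht (hv : d + 1 <= v) i (y : {ffun 'I_t -> 'I_v}) (s : 'I_(d+1)) : i <= t ->
  forall j : 'I_t, F ht (w ht i y s) (i + j) = y j.
Proof.
move=> hi j; apply: val_inj.
have hj := ltn_ord j; have hs := ltn_ord s.
case: (ltnP (i+j) t) => h.
- rewrite valF_lt //= ffunE /= modn_small // leq_addr addKn.
  by rewrite colI_small.
- rewrite valF_ge //= ffunE /=.
  have -> : (i + j) %% t = i + j - t.
    by rewrite -{1}(subnK h) modnDr modn_small //; lia.
  have -> : (i <= i + j - t) = false by apply/negbTE; rewrite -ltnNge; lia.
  have -> : colI ht (i + j - t + t - i) = j.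
    by apply: val_inj; rewrite /= modn_small //; lia.
  rewrite /= modnDml -addnA subnK; last lia.
  by rewrite modnDr modn_small.
Qed.


Lemma card_Rt d t v : #|Rt d t v| = (d+1) * v ^ t.
Proof. by rewrite card_prod card_ffun !card_ord. Qed.

Definition ee d t v (r : 'I_((d+1) * v ^ t)) : Rt d t v :=
  enum_val (cast_ord (esym (card_Rt d t v)) r).
Definition einv d t v (p : Rt d t v) : 'I_((d+1) * v ^ t) :=
  cast_ord (card_Rt d t v) (enum_rank p).
Lemma einvK d t v : cancel (@einv d t v) (@ee d t v).
Proof. by move=> p; rewrite /ee /einv cast_ordK enum_rankK. Qed.
Lemma eeK d t v : cancel (@ee d t v) (@einv d t v).
Proof. by move=> r; rewrite /ee /einv enum_valK cast_ordKV. Qed.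

Definition Amx d t v (ht : 0 < t) : 'M['I_v]_((d + 1) * v ^ t, 2 * t) :=
  \matrix_(r, c) F ht (@ee d t v r) c.

Lemma inrho d t v (ht : 0 < t) (T : cinter (2*t) t v) r :
  (r \in rho (Amx d v ht) T) = [forall j : 'I_t, F ht (ee r) (T.1 + j) == T.2 j].
Proof.
rewrite inE; apply/forallP/forallP => H j.
- have hc : T.1 + j < 2 * t by have := ltn_ord T.1; have := ltn_ord j; lia.
  by have := H j; move/forallP/(_ (Ordinal hc)); rewrite /= eqxx /= mxE.
- apply/forallP => c; apply/implyP => /eqP hc; rewrite mxE hc; exact: H j.
Qed.

Theorem mainTheorem8 (t v d : nat) :
  2 <= t -> 2 <= v -> 0 < d -> d + 1 <= v ->
  exists A : 'M['I_v]_((d + 1) * v ^ t, 2 * t), is_CDA d t A.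
Proof.
move=> ht2 hv2 hd hdv.
have ht : 0 < t by lia.
exists (Amx d v ht).
have Tle : forall T : cinter (2*t) t v, T.1 <= t.
  by move=> T; have := ltn_ord T.1; lia.
have winrho : forall (T : cinter (2*t) t v) s,
    einv (w ht T.1 T.2 s) \in rho (Amx d v ht) T.
  move=> T s; rewrite inrho; apply/forallP => j; rewrite einvK.
  by apply/eqP; apply: w_ok.
have getrho : forall (T : cinter (2*t) t v) r1 r2,
    r1 \in rho (Amx d v ht) T -> r2 \in rho (Amx d v ht) T ->
    forall j, j < t -> F ht (ee r1) (T.1 + j) = F ht (ee r2) (T.1 + j).
  move=> T r1 r2; rewrite !inrho => /forallP H1 /forallP H2 j hj.
  by have /eqP -> := H1 (Ordinal hj); have /eqP -> := H2 (Ordinal hj).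
have getrho1 : forall (T : cinter (2*t) t v) r,
    r \in rho (Amx d v ht) T -> forall j : 'I_t, F ht (ee r) (T.1 + j) = T.2 j.
  by move=> T r; rewrite inrho => /forallP H j; apply/eqP.
have uniq2 : forall (T T' : cinter (2*t) t v) r1 r2, T' != T ->
    r1 \in rho (Amx d v ht) T -> r2 \in rho (Amx d v ht) T ->
    r1 \in rho (Amx d v ht) T' -> r2 \in rho (Amx d v ht) T' -> r1 = r2.
  move=> T T' r1 r2 hTT h1 h2 h1' h2'.
  have a1 := getrho _ _ _ h1 h2; have a2 := getrho _ _ _ h1' h2'.
  case: (ltngtP T.1 T'.1) => h.
  - by apply: (can_inj (@eeK d t v)); exact: (two_windows hdv h (Tle T') a1 a2).
  - by apply: (can_inj (@eeK d t v)); exact: (two_windows hdv h (Tle T) a2 a1).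
  - exfalso; move/negP: hTT; apply; apply/eqP.
    case: T T' h h1 h1' {a1 a2 h2 h2'} => [i x] [i' x'] /= h h1 h1'.
    have hi : i' = i by apply: val_inj.
    subst i'; congr pair; apply/ffunP => j.
    by rewrite -(getrho1 _ _ h1 j) -(getrho1 _ _ h1' j).
split.
- move=> T; have h0 : 0 < d + 1 by lia.
  apply/set0Pn; exists (einv (w ht T.1 T.2 (Ordinal h0))); exact: winrho.
- move=> cT T hcard; split; last first.
    by move=> hT; rewrite /rhoS; exact: (bigcup_sup T hT).
  move=> hsub; case: (boolP (T \in cT)) => // hT; exfalso.
  set S := [set einv (w ht T.1 T.2 s) | s : 'I_(d+1)].
  have cS : #|S| = d+1.
    rewrite card_imset ?card_ord // => s1 s2 /(can_inj (@einvK d t v)).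
    by move/(congr1 fst).
  have SsubT : S \subset rho (Amx d v ht) T.
    by apply/subsetP => r /imsetP [s _ ->]; exact: winrho.
  have hle1 : forall T', T' \in cT -> #|S :&: rho (Amx d v ht) T'| <= 1.
    move=> T' hT'; apply/card_le1_eqP => r1 r2.
    move=> /setIP [hr1 hr1'] /setIP [hr2 hr2'].
    have hne : T' != T by apply: contraNneq hT => <-.
    have hr1T := subsetP SsubT _ hr1; have hr2T := subsetP SsubT _ hr2.
    exact: (uniq2 T T' r2 r1 hne hr2T hr1T hr2' hr1').
  have : #|S| <= d.
    apply: (leq_trans (n := #|\bigcup_(T' in cT) (S :&: rho (Amx d v ht) T')|)).
      apply: subset_leq_card; apply/subsetP => r hr.
      have := subsetP hsub r (subsetP SsubT r hr).
      rewrite /rhoS => /bigcupP [T' hT' hr'].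
      by apply/bigcupP; exists T' => //; rewrite inE hr hr'.
    apply: leq_trans (card_bigcup_le _ _) _.
    have hs : \sum_(T' in cT) #|S :&: rho (Amx d v ht) T'| <= \sum_(T' in cT) 1.
      by apply: leq_sum.
    by apply: leq_trans hs _; rewrite sum1_card hcard.
  by rewrite cS addn1 ltnn.
Qed.
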